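(* The variety $\mathbf N$ is generated by the semirings $S_c(a_1\cdots a_k)$, $k\geq 1$; that is, $\mathbf N=\mathsf V(\{S_c(a_1\cdots a_k)\mid k\ge1\})$.
   Context: $S_7$ is the ai-semiring on $\{\infty,a,1\}$ with $x+x=x$, $x+y=\infty$ for $x\neq y$, and commutative multiplication with $\infty$ a zero, $a\cdot a=\infty$, $a\cdot 1=a$, $1\cdot1=1$. $\mathbf N$ is the subvariety of $\mathsf V(S_7)$ defined by the identity $x^2y\approx x^2$. For $k\ge1$, $S_c(a_1\cdots a_k)$ is the flat semiring whose elements are $\infty$ together with all nonempty subwords of $a_1\cdots a_k$ in the free commutative semigroup; the product of two such words is their product if it is again such a subword and $\infty$ otherwise; $\infty$ is a multiplicative zero; $x+x=x$ and $x+y=\infty$ for $x\neq y$. *)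

(* Defs.v *)
From mathcomp Require Import all_boot.
Set Implicit Arguments. Unset Strict Implicit. Unset Printing Implicit Defensive.

Inductive term : Type :=
  | Var of nat
  | Add of term & term
  | Mul of term & term.

Fixpoint eval (T : Type) (add mul : T -> T -> T) (f : nat -> T) (t : term) : T :=
  match t with
  | Var n => f n
  | Add s u => add (eval add mul f s) (eval add mul f u)
  | Mul s u => mul (eval add mul f s) (eval add mul f u)
  end.

Definition holds (T : Type) (add mul : T -> T -> T) (u v : term) : Prop :=
  forall f : nat -> T, eval add mul f u = eval add mul f v.

Record is_ai_semiring (T : Type) (add mul : T -> T -> T) : Prop := {
  addA : forall x y z, add x (add y z) = add (add x y) z;
  addC : forall x y, add x y = add y x;
  addxx : forall x, add x x = x;
  mulA : forall x y z, mul x (mul y z) = mul (mul x y) z;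
  mulDl : forall x y z, mul (add x y) z = add (mul x z) (mul y z);
  mulDr : forall x y z, mul x (add y z) = add (mul x y) (mul x z)
}.

Inductive S7 : Type := Inf7 | A7 | One7.

Definition S7_add (x y : S7) : S7 :=
  match x, y with
  | Inf7, Inf7 => Inf7
  | A7, A7 => A7
  | One7, One7 => One7
  | _, _ => Inf7
  end.

Definition S7_mul (x y : S7) : S7 :=
  match x, y with
  | Inf7, _ => Inf7
  | _, Inf7 => Inf7
  | A7, A7 => Inf7
  | A7, One7 => A7
  | One7, A7 => A7
  | One7, One7 => One7
  end.

(** The flat semiring S_c(a_1 ... a_k): a nonempty subword of a_1...a_k in the
    free commutative semigroup is identified with the nonempty set of indices
    of its letters; [None] is ∞. *)
Definition Sc (k : nat) : eqType := option {A : {set 'I_k} | A != set0}.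

Definition Sc_add (k : nat) (x y : Sc k) : Sc k :=
  if x == y then x else None.

Definition Sc_mul (k : nat) (x y : Sc k) : Sc k :=
  match x, y with
  | Some A, Some B =>
      if [disjoint val A & val B] then insub (val A :|: val B) else None
  | _, _ => None
  end.

Definition x2y : term := Mul (Mul (Var 0) (Var 0)) (Var 1).
Definition x2 : term := Mul (Var 0) (Var 0).

Definition in_N (T : Type) (add mul : T -> T -> T) : Prop :=
  is_ai_semiring add mul /\
  (forall u v, holds S7_add S7_mul u v -> holds add mul u v) /\
  holds add mul x2y x2.

(** Membership in V({S_c(a_1...a_k) | k >= 1}) = Mod(Id(K)). *)
Definition in_V_Sc (T : Type) (add mul : T -> T -> T) : Prop :=
  is_ai_semiring add mul /\
  (forall u v, (forall k, 0 < k -> holds (@Sc_add k) (@Sc_mul k) u v) ->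
               holds add mul u v).

(* Main.v *)
Require Import Defs.
From mathcomp Require Import all_boot.
From Stdlib Require Import Classical.
Set Implicit Arguments. Unset Strict Implicit. Unset Printing Implicit Defensive.

Fixpoint vars (t : term) : seq nat :=
  match t with
  | Var n => [:: n]
  | Add s u => vars s ++ vars u
  | Mul s u => vars s ++ vars u
  end.

Lemma vars_nil t : vars t <> [::].
Proof. elim: t => [n|s IHs u IHu|s IHs u IHu] //=; by case: (vars s) IHs. Qed.

Lemma eval_ext (T : Type) (add mul : T -> T -> T) f1 f2 t :
  (forall x, x \in vars t -> f1 x = f2 x) -> eval add mul f1 t = eval add mul f2 t.
Proof.
elim: t => [n|s IHs u IHu|s IHs u IHu] /= H.
- by apply: H; rewrite inE.
- by rewrite IHs ?IHu // => x Hx; apply: H; rewrite mem_cat Hx ?orbT.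
- by rewrite IHs ?IHu // => x Hx; apply: H; rewrite mem_cat Hx ?orbT.
Qed.

Notation evS := (eval S7_add S7_mul).
Notation evC k := (eval (@Sc_add k) (@Sc_mul k)).

Lemma S7_inf_var f t x : x \in vars t -> f x = Inf7 -> evS f t = Inf7.
Proof.
elim: t => [n|s IHs u IHu|s IHs u IHu] /=.
- by rewrite inE => /eqP <-.
- rewrite mem_cat => /orP [H|H] Hf; [rewrite IHs //| rewrite IHu //];
  by case: (evS f _).
- rewrite mem_cat => /orP [H|H] Hf; [rewrite IHs //| rewrite IHu //];
  by case: (evS f _).
Qed.

Lemma Sc_none_var k (g : nat -> Sc k) t x :
  x \in vars t -> g x = None -> evC k g t = None.
Proof.
elim: t => [n|s IHs u IHu|s IHs u IHu] /=.
- by rewrite inE => /eqP <-.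
- rewrite mem_cat /Sc_add => /orP [H|H] Hf; [rewrite IHs //| rewrite IHu //];
  by case: eqP.
- rewrite mem_cat => /orP [H|H] Hf; [rewrite IHs //| rewrite IHu //];
  by case: (evC k g _).
Qed.

Definition hh k (i : 'I_k) (x : Sc k) : S7 :=
  match x with None => Inf7 | Some A => if i \in val A then A7 else One7 end.

Lemma hh_some k (i : 'I_k) A : hh i (Some A) <> Inf7.
Proof. by rewrite /=; case: ifP. Qed.

Lemma hh_inj k (A B : {A : {set 'I_k} | A != set0}) :
  (forall i, hh i (Some A) = hh i (Some B)) -> A = B.
Proof.
move=> H; apply: val_inj; apply/setP => i; move: (H i) => /=.
by case: (i \in val A); case: (i \in val B).
Qed.

Lemma Sc_addP k (x y : Sc k) V : Sc_add x y = Some V -> x = Some V /\ y = Some V.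
Proof. by rewrite /Sc_add; case: (x =P y) => [<- ->|]. Qed.

Lemma Sc_mulP k (x y : Sc k) V : Sc_mul x y = Some V ->
  exists A B, [/\ x = Some A, y = Some B, [disjoint val A & val B] &
                  val V = val A :|: val B].
Proof.
case: x => [A|] //; case: y => [B|] //=; case: ifP => // dis.
case: insubP => [W _ eW [<-]|//]; by exists A, B.
Qed.

Lemma R1 k (g : nat -> Sc k) t V i :
  evC k g t = Some V -> evS (fun x => hh i (g x)) t = hh i (Some V).
Proof.
elim: t V => [n|s IHs u IHu|s IHs u IHu] V /=.
- by move=> ->.
- by case/Sc_addP=> /IHs -> /IHu ->; rewrite /=; case: ifP.
- case/Sc_mulP=> [A [B [/IHs -> /IHu -> dis eV]]] /=.
  rewrite eV in_setU.
  case HA: (i \in val A); case HB: (i \in val B) => //.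
  by rewrite (disjointFr dis HA) in HB.
Qed.

Lemma S7_add_ninf x y : S7_add x y <> Inf7 -> x = y /\ x <> Inf7.
Proof. by case: x; case: y. Qed.

Lemma S7_mul_ninf x y : S7_mul x y <> Inf7 ->
  [/\ x <> Inf7, y <> Inf7 & ~ (x = A7 /\ y = A7)].
Proof. by case: x; case: y => //= _; split => // -[]. Qed.

Lemma R2 k (g : nat -> Sc k) t : 0 < k ->
  (forall i, evS (fun x => hh i (g x)) t <> Inf7) -> exists V, evC k g t = Some V.
Proof.
move=> k0; elim: t => [n|s IHs u IHu|s IHs u IHu] /= H.
- move: (H (Ordinal k0)); case: (g n) => [A|] //; by exists A.
- have Hs : forall i, evS (fun x => hh i (g x)) s <> Inf7.
    by move=> i; case: (S7_add_ninf (H i)).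
  have Hu : forall i, evS (fun x => hh i (g x)) u <> Inf7.
    by move=> i; case: (S7_add_ninf (H i)) => -> .
  case: (IHs Hs) => A eA; case: (IHu Hu) => B eB.
  have AB : A = B.
    apply: hh_inj => i; case: (S7_add_ninf (H i)).
    by rewrite (R1 i eA) (R1 i eB).
  by exists A; rewrite eA eB AB /Sc_add eqxx.
- have Hs : forall i, evS (fun x => hh i (g x)) s <> Inf7.
    by move=> i; case: (S7_mul_ninf (H i)).
  have Hu : forall i, evS (fun x => hh i (g x)) u <> Inf7.
    by move=> i; case: (S7_mul_ninf (H i)).
  case: (IHs Hs) => A eA; case: (IHu Hu) => B eB.
  rewrite eA eB /=.
  have dis : [disjoint val A & val B].
    apply/pred0P => i /=; apply/negP => /andP [iA iB].
    case: (S7_mul_ninf (H i)) => _ _; apply.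
    by rewrite (R1 i eA) (R1 i eB) /= iA iB.
  rewrite dis; case: insubP => [W _ _|]; first by exists W.
  rewrite setU_eq0 => /negP []; apply/andP => -[].
  by move: (valP A) => /negP.
Qed.

Definition isA (x : S7) := if x is A7 then true else false.
Definition ninf (x : S7) := if x is Inf7 then false else true.

Definition glue k (F : 'I_k -> nat -> S7) (x : nat) : Sc k :=
  if [forall i, ninf (F i x)] then
    (insub [set i | isA (F i x)] : option {A : {set 'I_k} | A != set0})
  else None.

Lemma glue_h k (F : 'I_k -> nat -> S7) x A i :
  glue F x = Some A -> hh i (Some A) = F i x.
Proof.
rewrite /glue; case: ifP => // /forallP Hall.
case: insubP => [W _ eW [<-]|//] /=; rewrite eW inE.
by move: (Hall i); case: (F i x).
Qed.

Lemma glue_some k (F : 'I_k -> nat -> S7) x i :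
  (forall j, F j x <> Inf7) -> F i x = A7 -> exists A, glue F x = Some A.
Proof.
move=> Hall Hi; rewrite /glue.
have -> : [forall j, ninf (F j x)] by apply/forallP => j; move: (Hall j); case: (F j x).
case: insubP => [W _ _|]; first by exists W.
by move/negP; case; apply/set0Pn; exists i; rewrite inE Hi.
Qed.

Lemma cover u (Fs : seq (nat -> S7)) f :
  (forall i, i < size Fs -> evS (nth f Fs i) u <> Inf7) ->
  (forall x, x \in vars u -> exists2 i, i < size Fs & nth f Fs i x = A7) ->
  evS f u <> Inf7 ->
  exists k (g : nat -> Sc k) (i0 : 'I_k), [/\ 0 < k,
    (exists U, evC k g u = Some U) &
    (forall t V, evC k g t = Some V -> evS f t = hh i0 (Some V))].
Proof.
move=> H1 H2 Hf.
pose k := (size Fs).+1.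
pose F := fun i : 'I_k => nth f Fs i.
have HF : forall i, evS (F i) u <> Inf7.
  move=> i; rewrite /F; case: (ltnP i (size Fs)) => Hi; first exact: H1.
  by rewrite nth_default.
have Hg : forall x, x \in vars u -> exists A, glue F x = Some A.
  move=> x Hx; case: (H2 x Hx) => i Hi Hix.
  apply: (@glue_some _ F x (Ordinal (ltnW Hi : i < k))) => //.
  by move=> j Hj; apply: (HF j); apply: S7_inf_var Hx Hj.
have agree : forall t, (forall x, x \in vars t -> glue F x <> None) ->
    forall i, evS (fun x => hh i (glue F x)) t = evS (F i) t.
  move=> t Ht i; apply: eval_ext => x Hx.
  case E: (glue F x) => [A|]; last by case: (Ht x Hx).
  exact: glue_h E.
exists k, (glue F), ord_max; split => //.
- apply: R2 => // i; rewrite agree //.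
  by move=> x Hx; case: (Hg x Hx) => A ->.
- move=> t V HV; rewrite -(R1 ord_max HV) agree.
    by rewrite /F /= nth_default.
  by move=> x Hx Hn; move: (Sc_none_var Hx Hn); rewrite HV.
Qed.

Lemma build (P : (nat -> S7) -> Prop) (s : seq nat) d :
  (forall y, y \in s -> exists f, P f /\ f y = A7) ->
  exists Fs, (forall i, i < size Fs -> P (nth d Fs i)) /\
             (forall y, y \in s -> exists2 i, i < size Fs & nth d Fs i y = A7).
Proof.
elim: s => [|y s IH] H.
  by exists [::]; split.
case: (H y (mem_head _ _)) => f [Pf fy].
case: IH => [y' Hy'|Fs [HP HC]]; first by apply: H; rewrite inE Hy' orbT.
exists (f :: Fs); split.
  by case=> [|i] //= Hi; apply: HP.
move=> y'; rewrite inE; case: (y' =P y) => [-> _|_ /= Hy'].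
  by exists 0.
by case: (HC y' Hy') => i Hi Hv; exists i.+1.
Qed.

Lemma nontriv_cover u k (g0 : nat -> Sc k) U0 :
  evC k g0 u = Some U0 ->
  forall y, y \in vars u -> exists f, evS f u <> Inf7 /\ f y = A7.
Proof.
move=> HU y Hy.
case E: (g0 y) => [A|]; last by move: (Sc_none_var Hy E); rewrite HU.
case/set0Pn: (valP A) => i Hi.
exists (fun x => hh i (g0 x)); split.
  by rewrite (R1 i HU); apply: hh_some.
by rewrite E /= Hi.
Qed.

Lemma key f a b k (g0 : nat -> Sc k) U0 :
  evC k g0 a = Some U0 ->
  (forall k, 0 < k -> holds (@Sc_add k) (@Sc_mul k) a b) ->
  evS f a <> Inf7 -> evS f a = evS f b.
Proof.
move=> H0 Hab Hf.
case: (@build (fun g => evS g a <> Inf7) _ f (nontriv_cover H0)) => Fs [HP HC].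
case: (cover HP HC Hf) => k' [g [i0 [k0 [U HU] Ht]]].
rewrite (Ht _ _ HU); symmetry; apply: Ht; by rewrite -(Hab k' k0 g).
Qed.

Lemma Sc_pos k (U : {A : {set 'I_k} | A != set0}) : 0 < k.
Proof. case/set0Pn: (valP U) => i _; exact: (leq_ltn_trans (leq0n i) (ltn_ord i)). Qed.

Lemma caseb u v k (g0 : nat -> Sc k) U0 :
  evC k g0 u = Some U0 ->
  (forall k, 0 < k -> holds (@Sc_add k) (@Sc_mul k) u v) ->
  holds S7_add S7_mul u v.
Proof.
move=> H0 Hab f.
case Hu: (evS f u) => [| |].
2,3: by rewrite -Hu; apply: key H0 Hab _; rewrite Hu.
case Hv: (evS f v) => [| |] //.
all: have H0' : evC k g0 v = Some U0 by rewrite -H0 -(Hab k (Sc_pos U0) g0).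
all: rewrite -Hu -Hv; symmetry; apply: (key (f:=f) H0'); last (by rewrite Hv).
all: by move=> k' k0 g; symmetry; apply: Hab.
Qed.

Lemma triv_zero u :
  (forall k, 0 < k -> forall g : nat -> Sc k, evC k g u = None) ->
  exists y, y \in vars u /\ forall f, evS f u <> Inf7 -> f y <> A7.
Proof.
move=> Htr; apply: NNPP => Hn.
have Hc : forall y, y \in vars u -> exists f, evS f u <> Inf7 /\ f y = A7.
  move=> y Hy; apply: NNPP => Hn2; apply: Hn; exists y; split => // f Hf Hfy.
  by apply: Hn2; exists f.
case Ev: (vars u) => [|y0 s]; first by case: (vars_nil Ev).
case: (Hc y0); first by rewrite Ev mem_head.
move=> f0 [Hf0 _].
case: (@build (fun g => evS g u <> Inf7) _ f0 Hc) => Fs [HP HC].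
case: (cover HP HC Hf0) => k' [g [i0 [k0 [U HU] _]]].
by rewrite Htr in HU.
Qed.

Lemma S7_to_Sc u v k (g : nat -> Sc k) : 0 < k ->
  holds S7_add S7_mul u v -> evC k g u = evC k g v.
Proof.
move=> k0 Huv.
have one : forall a b, holds S7_add S7_mul a b -> forall U,
    evC k g a = Some U -> evC k g b = Some U.
  move=> a b Hab U HU.
  have Hi : forall i, evS (fun x => hh i (g x)) b = hh i (Some U).
    by move=> i; rewrite -Hab (R1 i HU).
  case: (@R2 k g b k0) => [i|V HV]; first by rewrite Hi; apply: hh_some.
  rewrite HV; congr Some; apply: hh_inj => i.
  by rewrite -(R1 i HV) Hi.
case Eu: (evC k g u) => [U|]; first by rewrite (one u v Huv U Eu).
case Ev: (evC k g v) => [V|] //.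
by rewrite (one v u (fun f => esym (Huv f)) V Ev) in Eu.
Qed.

Definition asg (T : Type) (s t : T) : nat -> T := fun n => if n == 0 then s else t.

Section TT.
Variables (T : Type) (add mul : T -> T -> T).
Hypothesis HS : forall u v, holds S7_add S7_mul u v -> holds add mul u v.
Hypothesis Hx : holds add mul x2y x2.

Lemma T_comm s t : mul s t = mul t s.
Proof.
have H := HS (u := Mul (Var 0) (Var 1)) (v := Mul (Var 1) (Var 0)).
have := H _ (asg s t); apply.
by move=> f /=; case: (f 0); case: (f 1).
Qed.

Lemma T_x2y s t : mul (mul s s) t = mul s s.
Proof. exact: (Hx (asg s t)). Qed.

Lemma T_addz s t : add t (mul s s) = mul s s.
Proof.
have H := HS (u := Add (Var 1) (Mul (Var 0) (Var 0)))
             (v := Mul (Mul (Var 0) (Var 0)) (Mul (Var 1) (Var 1))).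
have -> : add t (mul s s) = mul (mul s s) (mul t t).
  have := H _ (asg s t); apply.
  by move=> f /=; case: (f 0); case: (f 1).
exact: T_x2y.
Qed.

Lemma T_sq s s' : mul s s = mul s' s'.
Proof. by rewrite -(T_x2y s (mul s' s')) T_comm T_x2y. Qed.

Lemma T_zero u y : y \in vars u -> (forall f, evS f u <> Inf7 -> f y <> A7) ->
  forall fT, eval add mul fT u = mul (fT y) (fT y).
Proof.
move=> Hy Hf fT.
have H := HS (u := Add u (Mul u (Mul (Var y) (Var y)))) (v := u).
have E : add (eval add mul fT u) (mul (eval add mul fT u) (mul (fT y) (fT y)))
         = eval add mul fT u.
  have := H _ fT; apply => f /=.
  case Efy: (f y).
  - by rewrite (S7_inf_var Hy Efy).
  - case Eu: (evS f u) => //; by case: (Hf f); rewrite ?Eu.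
  - by case: (evS f u).
by rewrite -E T_comm T_x2y T_addz.
Qed.
End TT.


Theorem lemma4p5 (T : Type) (add mul : T -> T -> T) :
  in_N add mul <-> in_V_Sc add mul.
Proof.
split.
- case=> Hai [HS Hx]; split => // u v Huv.
  case: (classic (exists k (g : nat -> Sc k) U, evC k g u = Some U)).
    by case=> k [g [U HU]]; apply: HS; apply: caseb HU Huv.
  move=> Hn.
  have Tu : forall k, 0 < k -> forall g : nat -> Sc k, evC k g u = None.
    move=> k k0 g; case E: (evC k g u) => [U|] //; case: Hn; by exists k, g, U.
  have Tv : forall k, 0 < k -> forall g : nat -> Sc k, evC k g v = None.
    by move=> k k0 g; rewrite -(Huv k k0 g) Tu.
  case: (triv_zero Tu) => y [Hy Hfy]; case: (triv_zero Tv) => y' [Hy' Hfy'].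
  move=> fT; rewrite (T_zero HS Hx Hy Hfy) (T_zero HS Hx Hy' Hfy').
  exact: (T_sq HS Hx).
- case=> Hai HV; split => //; split.
    move=> u v Huv; apply: HV => k k0 g; exact: S7_to_Sc.
  apply: HV => k k0 g /=.
  case: (g 0) => [A|] //=.
  have -> : [disjoint val A & val A] = false.
    apply/negP => dis; case/set0Pn: (valP A) => i Hi.
    by move: (disjointFr dis Hi); rewrite Hi.
  by [].
Qed.
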